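(* Let $\mathbf{A}$ be a nonempty subset of $\mathbf{P}_{\mathbf{U}}$. Then the following are equivalent: (i) there exists a subclass $\mathbf{X}\subseteq\mathbf{U}$ with $\mathbf{P}_{\mathbf{X}}=\mathbf{A}$; (ii) $\mathbf{A}$ is a submonoid of $(\mathbf{F},\circ)$; (iii) $\mathbf{A}$ is a submonoid of $(\mathbf{P}_{\mathbf{U}},\circ)$.
   Context: All metric spaces are assumed to have nonempty underlying sets. A metric space $(X,d)$ is ultrametric if $d(x,y)\le\max\{d(x,z),d(z,y)\}$ for all $x,y,z\in X$; $\mathbf{U}$ is the class of all ultrametric spaces. $\mathbf{F}$ is the set of all functions $f:[0,\infty)\to[0,\infty)$, a monoid under composition with identity $\mathrm{id}(x)=x$; a submonoid is a subset closed under composition containing $\mathrm{id}$. For a class $\mathbf{X}$ of metric spaces, $\mathbf{P}_{\mathbf{X}}$ denotes the set of all $f\in\mathbf{F}$ such that for every metric space $(X,d)$, if $(X,d)\in\mathbf{X}$ then $(X,f\circ d)\in\mathbf{X}$ (where $f\circ d(x,y)=f(d(x,y))$). Thus $\mathbf{P}_{\mathbf{U}}$ is the set of ultrametric preserving functions. *)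

(* Defs.v *)
From Stdlib Require Import Reals.
Open Scope R_scope.

Definition nnR : Type := { x : R | 0 <= x }.

Definition F : Type := nnR -> nnR.

Definition idF : F := fun x => x.
Definition compF (f g : F) : F := fun x => f (g x).

Definition is_metric (X : Type) (d : X -> X -> nnR) : Prop :=
  inhabited X /\
  (forall x y, proj1_sig (d x y) = 0 <-> x = y) /\
  (forall x y, d x y = d y x) /\
  (forall x y z, proj1_sig (d x y) <= proj1_sig (d x z) + proj1_sig (d z y)).

Definition is_ultrametric (X : Type) (d : X -> X -> nnR) : Prop :=
  is_metric X d /\
  (forall x y z, proj1_sig (d x y) <= Rmax (proj1_sig (d x z)) (proj1_sig (d z y))).

Definition MClass : Type := forall X : Type, (X -> X -> nnR) -> Prop.

Definition is_class_of_metric_spaces (C : MClass) : Prop :=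
  forall X d, C X d -> is_metric X d.

Definition U : MClass := is_ultrametric.

Definition subclass (C D : MClass) : Prop := forall X d, C X d -> D X d.

Definition compd {X : Type} (f : F) (d : X -> X -> nnR) : X -> X -> nnR :=
  fun x y => f (d x y).

Definition P (C : MClass) : F -> Prop :=
  fun f => forall X (d : X -> X -> nnR), is_metric X d -> C X d -> C X (compd f d).

Definition set_eq (A B : F -> Prop) : Prop := forall f, A f <-> B f.
Definition subset (A B : F -> Prop) : Prop := forall f, A f -> B f.

Definition submonoid_F (A : F -> Prop) : Prop :=
  A idF /\ (forall f g, A f -> A g -> A (compF f g)).

Definition submonoid_PU (A : F -> Prop) : Prop :=
  subset A (P U) /\ A idF /\ (forall f g, A f -> A g -> A (compF f g)).

(* Main.v *)
Require Import Defs.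
From Stdlib Require Import Reals Lra ProofIrrelevance FunctionalExtensionality Eqdep.

Lemma nnR_eq (a b : nnR) : proj1_sig a = proj1_sig b -> a = b.
Proof.
  destruct a as [a ha], b as [b hb]; simpl; intros ->.
  f_equal; apply proof_irrelevance.
Qed.

Definition zero : nnR := exist _ 0 (Rle_refl 0).
Definition mx (x y : nnR) : nnR :=
  exist _ (Rmax (proj1_sig x) (proj1_sig y))
    (Rle_trans _ _ _ (proj2_sig x) (Rmax_l _ _)).
Definition d0 (x y : nnR) : nnR :=
  if Req_EM_T (proj1_sig x) (proj1_sig y) then zero else mx x y.

Lemma d0_ultra : is_ultrametric nnR d0.
Proof.
  unfold d0; split; [split; [|split; [|split]]|].
  - exact (inhabits zero).
  - intros x y; destruct (Req_EM_T _ _) as [h|h]; simpl.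
    + split; auto. intros _. apply nnR_eq; auto.
    + split.
      * destruct x as [x hx], y as [y hy]; simpl in *.
        intro H; exfalso; revert H;
        unfold Rmax; destruct (Rle_dec x y); lra.
      * intros ->; congruence.
  - intros x y; destruct (Req_EM_T (proj1_sig x) (proj1_sig y)) as [h|h];
    destruct (Req_EM_T (proj1_sig y) (proj1_sig x)) as [h'|h']; try lra;
    auto; apply nnR_eq; simpl; apply Rmax_comm.
  - intros x y z;
    destruct x as [x hx], y as [y hy], z as [z hz]; simpl;
    destruct (Req_EM_T x y); destruct (Req_EM_T x z); destruct (Req_EM_T z y);
    simpl; unfold Rmax;
    repeat (match goal with |- context [Rle_dec ?a ?b] => destruct (Rle_dec a b) | H : context [Rle_dec ?a ?b] |- _ => destruct (Rle_dec a b) end; simpl in *);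
    lra.
  - intros x y z;
    destruct x as [x hx], y as [y hy], z as [z hz]; simpl;
    destruct (Req_EM_T x y); destruct (Req_EM_T x z); destruct (Req_EM_T z y);
    simpl; unfold Rmax;
    repeat (match goal with |- context [Rle_dec ?a ?b] => destruct (Rle_dec a b) | H : context [Rle_dec ?a ?b] |- _ => destruct (Rle_dec a b) end; simpl in *);
    lra.
Qed.

Definition cast {X : Type} (e : X = nnR) (x : X) : nnR :=
  eq_rect X (fun T => T) x nnR e.

Definition CA (A : F -> Prop) : MClass :=
  fun X d => exists (e : X = nnR) f, A f /\
    forall x y, d x y = f (d0 (cast e x) (cast e y)).

Theorem mainTheorem10 (A : F -> Prop) :
  (exists f, A f) -> subset A (P U) ->
  (((exists C : MClass, is_class_of_metric_spaces C /\ subclass C U /\ set_eq (P C) A)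
      <-> submonoid_F A) /\
   (submonoid_F A <-> submonoid_PU A)).
Proof.
  intros _ HAU.
  assert (HII : submonoid_F A <-> submonoid_PU A).
  { unfold submonoid_F, submonoid_PU; tauto. }
  split; [|exact HII].
  split.
  - intros [C [HC [HCU Heq]]]. split.
    + apply Heq. intros X d _ Hd. exact Hd.
    + intros f g Hf Hg. apply Heq. intros X d Hm Hd.
      apply Heq in Hf. apply Heq in Hg.
      apply (Hf X (compd g d)); [apply HC|]; apply Hg; auto.
  - intros [Hid Hcomp]. exists (CA A).
    assert (HCU : subclass (CA A) U).
    { intros X d [e [f [Hf Hd]]]. subst X.
      assert (d = compd f d0).
      { apply functional_extensionality; intro x;
        apply functional_extensionality; intro y; apply Hd. }
      subst d. apply (HAU f Hf); [apply d0_ultra|apply d0_ultra]. }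
    split; [|split; [exact HCU|]].
    + intros X d H. apply HCU in H. apply H.
    + intro g; split.
      * intro Hg.
        assert (Hm : CA A nnR (compd idF d0)).
        { exists eq_refl, idF; split; auto. }
        destruct (Hg nnR _ (proj1 (HCU _ _ Hm)) Hm) as [e [f [Hf Hd]]].
        rewrite (UIP_refl _ _ e) in Hd. simpl in Hd.
        replace g with f; auto.
        apply functional_extensionality; intro t.
        destruct (Req_EM_T (proj1_sig t) 0) as [h|h].
        -- specialize (Hd t t); unfold compd, idF, d0 in Hd.
           destruct (Req_EM_T _ _); [|lra].
           assert (t = zero) by (apply nnR_eq; auto). subst t. auto.
        -- specialize (Hd zero t); unfold compd, idF, d0 in Hd.
           destruct (Req_EM_T _ _) as [h'|]; [simpl in h'; lra|].
           assert (mx zero t = t).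
           { apply nnR_eq; simpl. destruct t as [t ht]; simpl in *.
             unfold Rmax; destruct (Rle_dec 0 t); lra. }
           rewrite H in Hd. auto.
      * intros Hg X d _ [e [f [Hf Hd]]].
        exists e, (compF g f); split; auto.
        intros x y; unfold compd, compF; rewrite Hd; auto.
Qed.
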